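(* Let $0<T\le1$, let $L$ be an invariant intrinsic location functional and $\mathbf X$ a periodic stationary process with period $1$. Then the càdlàg density $f^{\mathbf X}_{L,T}$ of $L(\mathbf X,[0,T])$ on $(0,T)$ satisfies $f^{\mathbf X}_{L,T}(t)\ge 1$ for all $t\in(0,T)$.
   Context: Let $H$ be a set of functions $\mathbb R\to\mathbb R$ with period $1$, invariant under shifts ($\theta_cg(x)=g(x+c)$), with the cylindrical $\sigma$-field; $\mathcal I$ is the set of compact intervals $[a,b]$, $a<b$. An intrinsic location functional is a map $L:H\times\mathcal I\to\mathbb R\cup\{\infty\}$ such that: (i) $L(\cdot,I)$ is measurable; (ii) $L(g,I)\in I\cup\{\infty\}$; (iii) $L(g,I)=L(\theta_cg,I-c)+c$ (with $\infty+c=\infty$); (iv) if $I_2\subseteq I_1$ and $L(g,I_1)\in I_2$ then $L(g,I_2)=L(g,I_1)$; (v) if $I_2\subseteq I_1$ and $L(g,I_2)\ne\infty$ then $L(g,I_1)\neq\infty$. It is called invariant if moreover $L(g,I)\ne\infty$ for all $g,I$, and $L(g,[0,1])=L(g,[a,a+1])\pmod 1$ for all $a\in\mathbb R$, $g\in H$. A periodic stationary process with period $1$ is a stationary process with continuous sample paths of period $1$ lying in $H$. The law of $L(\mathbf X,[0,T])$ restricted to $(0,T)$ is absolutely continuous with a càdlàg density $f^{\mathbf X}_{L,T}$. *)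

(* Defs.v *)
From HB Require Import structures.
From mathcomp Require Import all_boot all_order all_algebra.
From mathcomp Require Import all_classical all_reals all_analysis.
Set Implicit Arguments. Unset Strict Implicit. Unset Printing Implicit Defensive.
Import Order.TTheory GRing.Theory Num.Theory.
Import numFieldNormedType.Exports.
Local Open Scope classical_set_scope.
Local Open Scope ring_scope.

Section Defs.
Variable R : realType.

Definition shift (c : R) (g : R -> R) : R -> R := fun x => g (x + c).

Definition period1_shift_invariant (H : set (R -> R)) : Prop :=
  (forall g, H g -> forall x, g (x + 1) = g x) /\
  (forall g c, H g -> H (shift c g)).

Definition cylinder_sets (H : set (R -> R)) : set (set (R -> R)) :=
  [set A | exists (t : R) (B : set R), measurable B /\
                                       A = H `&` [set g | B (g t)]].

(* The value None stands for infinity.  A compact interval [a,b] (a < b)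
   is represented by its endpoints. *)
Definition intrinsic_location_functional (H : set (R -> R))
  (L : (R -> R) -> R -> R -> option R) : Prop :=
  (forall a b, a < b -> forall B : set R, measurable B ->
     <<s H, cylinder_sets H >>
       [set g | H g /\ exists x, L g a b = Some x /\ B x]) /\
  (forall g a b, H g -> a < b ->
     forall x, L g a b = Some x -> a <= x <= b) /\
  (forall g a b c, H g -> a < b ->
     L g a b = omap (fun x => x + c) (L (shift c g) (a - c) (b - c))) /\
  (forall g a1 b1 a2 b2, H g -> a1 < b1 -> a2 < b2 ->
     a1 <= a2 -> b2 <= b1 ->
     forall x, L g a1 b1 = Some x -> a2 <= x <= b2 ->
       L g a2 b2 = Some x) /\
  (forall g a1 b1 a2 b2, H g -> a1 < b1 -> a2 < b2 ->
     a1 <= a2 -> b2 <= b1 ->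
     L g a2 b2 <> None -> L g a1 b1 <> None).

Definition invariant_intrinsic_location_functional (H : set (R -> R))
  (L : (R -> R) -> R -> R -> option R) : Prop :=
  intrinsic_location_functional H L /\
  (forall g a b, H g -> a < b -> L g a b <> None) /\
  (forall g a, H g -> exists (x y : R) (k : int),
      L g 0 1 = Some x /\ L g a (a + 1) = Some y /\ x - y = k%:~R).

(* Stationarity: all finite-dimensional
   distributions are shift invariant (stated on measurable rectangles,
   which generate the product sigma-field). *)
Definition periodic_stationary_process (H : set (R -> R))
  (d : measure_display) (Omega : measurableType d)
  (P : probability Omega R) (X : Omega -> R -> R) : Prop :=
  (forall t, measurable_fun setT (fun w => X w t)) /\
  (forall w, H (X w)) /\
  (forall w, continuous (X w)) /\
  (forall (n : nat) (ts : 'I_n -> R) (Bs : 'I_n -> set R) (c : R),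
     (forall i, measurable (Bs i)) ->
     P [set w | forall i, Bs i (X w (ts i + c))] =
     P [set w | forall i, Bs i (X w (ts i))]).

Definition is_density_on (d : measure_display) (Omega : measurableType d)
  (P : probability Omega R) (Y : Omega -> option R) (T : R) (f : R -> R)
  : Prop :=
  forall B : set R, measurable B -> B `<=` `]0, T[ ->
    P [set w | exists x, Y w = Some x /\ B x] =
    (\int[lebesgue_measure]_(x in B) (f x)%:E)%E.

Definition cadlag_on (a b : R) (f : R -> R) : Prop :=
  forall t, a < t < b ->
    f x @[x --> t^'+] --> f t /\ cvg (f x @[x --> t^'-]).

End Defs.

(* Main.v *)
Require Import Defs.
From HB Require Import structures.
From mathcomp Require Import all_boot all_order all_algebra.
From mathcomp Require Import all_classical all_reals all_analysis.
From mathcomp Require Import lra measurable_realfun.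
Import Order.TTheory GRing.Theory Num.Theory.
Import numFieldNormedType.Exports.
Local Open Scope classical_set_scope.
Local Open Scope ring_scope.
Section Transfer.
Variables (R : realType) (H : set (R -> R)) (d : measure_display)
  (Omega : measurableType d) (P : probability Omega R) (X : Omega -> R -> R).
Hypothesis HX : periodic_stationary_process H P X.
Hypothesis Hsh : period1_shift_invariant H.

Fixpoint cylP (s : seq (R * set R)) (g : R -> R) : Prop :=
  match s with [::] => True | p :: s' => p.2 (g p.1) /\ cylP s' g end.
Fixpoint measL (s : seq (R * set R)) : Prop :=
  match s with [::] => True | p :: s' => measurable p.2 /\ measL s' end.

Lemma cylP_cat s1 s2 g : cylP (s1 ++ s2) g <-> cylP s1 g /\ cylP s2 g.
Proof.
elim: s1 => [|p s1 IH] /=; first by split => // -[].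
rewrite IH; tauto.
Qed.

Lemma measL_cat s1 s2 : measL s1 -> measL s2 -> measL (s1 ++ s2).
Proof. by elim: s1 => [|p s1 IH] //= [? ?] ?; split => //; apply: IH. Qed.

Let d0 : R * set R := (0, setT).

Lemma cylP_nth s g : cylP s g <->
  (forall i, (i < size s)%N -> (nth d0 s i).2 (g (nth d0 s i).1)).
Proof.
elim: s => [|p s IH] /=; first by split.
rewrite IH; split.
  by move=> [h1 h2] [|i] //= /h2.
by move=> h; split; [exact: (h 0%N isT)| move=> i Hi; exact: (h i.+1 Hi)].
Qed.

Lemma measL_nth s : measL s -> forall i, measurable (nth d0 s i).2.
Proof.
elim: s => [|p s IH] /=; first by move=> _ [|i]; exact: measurableT.
by move=> [mp ms] [|i] //=; apply: IH.
Qed.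

Lemma meas_cyl s : measL s -> measurable [set w | cylP s (X w)].
Proof.
case: HX => HX1 _.
elim: s => [|p s IH] /=; first by move=> _; exact: measurableT.
move=> [mp ms].
have -> : [set w | p.2 (X w p.1) /\ cylP s (X w)] =
  (setT `&` (fun w => X w p.1) @^-1` p.2) `&` [set w | cylP s (X w)].
  by apply/seteqP; split => w /=; tauto.
apply: measurableI; last exact: IH.
exact: HX1.
Qed.

Lemma stat_cyl s (c : R) : measL s ->
  P [set w | cylP s (Defs.shift c (X w))] = P [set w | cylP s (X w)].
Proof.
move=> ms; case: HX => _ [_ [_ HX4]].
have := HX4 (size s) (fun i => (nth d0 s i).1) (fun i => (nth d0 s i).2) c
  (fun i => @measL_nth s ms i).
have E1 : forall g, cylP s g <-> (forall i : 'I_(size s), (nth d0 s i).2 (g (nth d0 s i).1)).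
  move=> g; rewrite cylP_nth; split; first by move=> h i; apply: h.
  by move=> h i Hi; exact: (h (Ordinal Hi)).
have -> : [set w | cylP s (Defs.shift c (X w))] =
    [set w | forall i : 'I_(size s), (nth d0 s i).2 (X w ((nth d0 s i).1 + c))].
  by apply/seteqP; split => w /=; rewrite E1.
have -> : [set w | cylP s (X w)] =
    [set w | forall i : 'I_(size s), (nth d0 s i).2 (X w ((nth d0 s i).1))].
  by apply/seteqP; split => w /=; rewrite E1.
by [].
Qed.

Definition Gp := [set A | exists s, measL s /\ A = H `&` cylP s].

Variable c : R.

Definition Lam := [set A : set (R -> R) | A `<=` H /\
  measurable [set w | A (X w)] /\ measurable [set w | A (Defs.shift c (X w))] /\
  P [set w | A (X w)] = P [set w | A (Defs.shift c (X w))]].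

Lemma HXw w : H (X w). Proof. by case: HX => _ []. Qed.
Lemma HXcw w : H (Defs.shift c (X w)). Proof. by case: Hsh => _ Hs; apply: Hs; exact: HXw. Qed.

Lemma Lam_lambda : lambda_system H Lam.
Proof.
split.
- by move=> A [].
- split => //.
  have -> : [set w | H (X w)] = setT by apply/seteqP; split => w // _; exact: HXw.
  have -> : [set w | H (Defs.shift c (X w))] = setT.
    by apply/seteqP; split => w // _; exact: HXcw.
  by split; [exact: measurableT|split; [exact: measurableT|]].
- move=> A B BA [AH [mA [mcA eA]]] [BH [mB [mcB eB]]].
  split; first by move=> x [/AH].
  have -> : [set w | (A `\` B) (X w)] = [set w | A (X w)] `\` [set w | B (X w)] by [].
  have -> : [set w | (A `\` B) (Defs.shift c (X w))] =
    [set w | A (Defs.shift c (X w))] `\` [set w | B (Defs.shift c (X w))] by [].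
  split; first exact: measurableD.
  split; first exact: measurableD.
  rewrite measureD // ?measureD //; last 2 first.
    by rewrite (le_lt_trans (probability_le1 _ _)) ?ltry.
    by rewrite (le_lt_trans (probability_le1 _ _)) ?ltry.
  rewrite setIidr; last by move=> w /BA.
  rewrite setIidr; last by move=> w /BA.
  by congr (_ - _)%E.
- move=> F ndF LF.
  split; first by move=> x [i _ /(proj1 (LF i))].
  have mF i := proj1 (proj2 (LF i)).
  have mcF i := proj1 (proj2 (proj2 (LF i))).
  have m1 : measurable [set w | (\bigcup_i F i) (X w)].
    have -> : [set w | (\bigcup_i F i) (X w)] = \bigcup_i [set w | F i (X w)] by [].
    exact: bigcupT_measurable.
  have m2 : measurable [set w | (\bigcup_i F i) (Defs.shift c (X w))].
    have -> : [set w | (\bigcup_i F i) (Defs.shift c (X w))] =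
       \bigcup_i [set w | F i (Defs.shift c (X w))] by [].
    exact: bigcupT_measurable.
  split => //; split => //.
  have c1 := @nondecreasing_cvg_mu _ _ _ P (fun i => [set w | F i (X w)]) mF m1.
  have c2 := @nondecreasing_cvg_mu _ _ _ P (fun i => [set w | F i (Defs.shift c (X w))]) mcF m2.
  have nd1 : nondecreasing_seq (fun i => [set w | F i (X w)]).
    by move=> m n mn; apply/subsetPset => w /=; move: (ndF m n mn) => /subsetPset; apply.
  have nd2 : nondecreasing_seq (fun i => [set w | F i (Defs.shift c (X w))]).
    by move=> m n mn; apply/subsetPset => w /=; move: (ndF m n mn) => /subsetPset; apply.
  have {}c1 := c1 nd1; have {}c2 := c2 nd2.
  have e : (fun i => P [set w | F i (X w)]) = (fun i => P [set w | F i (Defs.shift c (X w))]).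
    by apply/funext => i; exact: (proj2 (proj2 (proj2 (LF i)))).
  rewrite /comp e in c1; rewrite /comp in c2.
  exact: (cvg_unique _ c1 c2).
Qed.

Lemma cylP_shift s g : cylP s (Defs.shift c g) <->
  cylP (map (fun p => (p.1 + c, p.2)) s) g.
Proof. by elim: s => [|p s IH] //=; rewrite IH. Qed.

Lemma measL_shift s : measL s -> measL (map (fun p => (p.1 + c, p.2)) s).
Proof. by elim: s => [|p s IH] //= [? ?]; split => //; apply: IH. Qed.

Lemma Gp_Lam : Gp `<=` Lam.
Proof.
move=> A [s [ms ->]]; split; first by move=> g [].
have e1 : [set w | (H `&` cylP s) (X w)] = [set w | cylP s (X w)].
  by apply/seteqP; split => w /=; [case|split => //; exact: HXw].
have e2 : [set w | (H `&` cylP s) (Defs.shift c (X w))] =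
    [set w | cylP s (Defs.shift c (X w))].
  by apply/seteqP; split => w /=; [case|split => //; exact: HXcw].
rewrite e1 e2; split; first exact: meas_cyl.
split; last by rewrite stat_cyl.
have -> : [set w | cylP s (Defs.shift c (X w))] =
   [set w | cylP (map (fun p => (p.1 + c, p.2)) s) (X w)].
  by apply/seteqP; split => w /=; rewrite cylP_shift.
by apply: meas_cyl; apply: measL_shift.
Qed.

Lemma Gp_setI : setI_closed Gp.
Proof.
move=> A B [s1 [m1 ->]] [s2 [m2 ->]]; exists (s1 ++ s2); split.
  exact: measL_cat.
by apply/seteqP; split => g /=; rewrite cylP_cat; tauto.
Qed.

Lemma Gp_sub : forall A, <<s H, Gp >> A -> A `<=` H.
Proof.
move=> A; apply: (@smallest_sub _ _ _ [set A | A `<=` H]) => //.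
  split => //.
  - by move=> B _; apply: subDsetl.
  - by move=> F hF; apply: bigcup_sub => i _; exact: hF.
by move=> B [s [_ ->]] g [].
Qed.

Lemma cyl_Gp : <<s H, cylinder_sets H >> `<=` <<s H, Gp >>.
Proof.
apply: smallest_sub; first exact: smallest_sigma_algebra.
move=> A [t [B [mB ->]]]; apply: sub_sigma_algebra.
exists [:: (t, B)]; split => //=.
by apply/seteqP; split => g /=; tauto.
Qed.

Lemma transfer A : <<s H, cylinder_sets H >> A ->
  measurable [set w | A (X w)] /\ P [set w | A (X w)] = P [set w | A (Defs.shift c (X w))].
Proof.
move=> /cyl_Gp hA.
have := @lambda_system_subset _ Gp Gp_setI H Lam Lam_lambda Gp_Lam Gp_sub A hA.
by case=> _ [? [_ ?]].
Qed.

End Transfer.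

Section Frac.
Context {R : realType}.
Definition fr (u : R) : R := u - (Num.floor u)%:~R.

Lemma fr_range u : 0 <= fr u < 1.
Proof.
rewrite /fr; have /andP[h1 h2] := floor_itv u.
rewrite intrD in h2; apply/andP; split; lra.
Qed.

Lemma fr_addz u (k : int) : fr (u + k%:~R) = fr u.
Proof.
rewrite /fr floorDrz ?intr_int // intrKfloor intrD; lra.
Qed.

Lemma fr_id u : 0 <= u < 1 -> fr u = u.
Proof.
move=> hu; rewrite /fr (@floor_def _ u 0); first by rewrite subr0.
by rewrite add0r.
Qed.

Lemma fr_shift (u c a : R) : 0 <= u < 1 -> 0 <= c -> c + a <= 1 -> 0 < a ->
  (fr (u - c) < a) <-> (c <= u < c + a).
Proof.
move=> /andP[u0 u1] c0 ca a0.
have [cu|uc] := leP c u.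
  rewrite fr_id; last by apply/andP; split; lra.
  split => h; [apply/andP; split; lra | move/andP: h => [_ h]; lra].
have -> : u - c = (u - c + 1) + (-1)%:~R by rewrite intrN; lra.
rewrite fr_addz fr_id; last by apply/andP; split; lra.
split => h; [lra | move/andP: h => [h _]; lra].
Qed.

Lemma fr_measurable : measurable_fun setT fr.
Proof.
apply: measurable_funB; first exact: measurable_id.
apply: nondecreasing_measurable => // x y xy.
by rewrite ler_int; apply: le_floor.
Qed.

End Frac.

Section IntUB.
Context {R : realType}.
Local Open Scope ereal_scope.

Lemma int_ub (f : R -> R) (I : set R) (c0 : R) : measurable I -> (0 <= c0)%R ->
  (forall x, I x -> (f x <= c0)%R) ->
  \int[@lebesgue_measure R]_(x in I) (f x)%:E <= c0%:E * (@lebesgue_measure R) I.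
Proof.
move=> mI c00 fc.
have E := integral_cst (@lebesgue_measure R) mI c0%:E.
suff hs : \int[@lebesgue_measure R]_(x in I) (f x)%:E <=
    \int[@lebesgue_measure R]_(x in I) (cst c0%:E) x.
  by apply: (le_trans hs); rewrite E.
rewrite integralE.
have h0 : 0 <= \int[@lebesgue_measure R]_(x in I) ((fun x => (f x)%:E)^\- x).
  by apply: integral_ge0 => x _; exact: funeneg_ge0.
apply: le_trans (leeB (lexx _) h0) _; rewrite sube0.
rewrite ge0_integralE; last by move=> x _; exact: funepos_ge0.
rewrite ge0_integralE; last by move=> x _; rewrite lee_fin.
apply: ereal_sup_le => _ [h /= hh <-]; exists h => //= x.
apply: le_trans (hh x) _.
rewrite /patch; case: ifP => // /set_mem Ix.
rewrite funeposE ge_max !lee_fin fc //.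
Qed.
End IntUB.

Theorem mainTheorem6 (R : realType) (H : set (R -> R))
  (L : (R -> R) -> R -> R -> option R)
  (d : measure_display) (Omega : measurableType d)
  (P : probability Omega R) (X : Omega -> R -> R) (T : R) (f : R -> R) :
  period1_shift_invariant H ->
  invariant_intrinsic_location_functional H L ->
  periodic_stationary_process H P X ->
  0 < T -> T <= 1 ->
  is_density_on P (fun w => L (X w) 0 T) T f ->
  cadlag_on 0 T f ->
  forall t, 0 < t < T -> 1 <= f t.
Proof.
move=> Hsh [[Lmeas [Lii [Liii [Liv Lv]]]] [Lsome Linv]] HX T0 T1 Hdens Hcad t.
move=> /andP[t0 tT].
have HXw w : H (X w) by case: HX => _ [].
have HXcw c w : H (Defs.shift c (X w)) by case: Hsh => _ Hs; apply: Hs.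
pose y w := odflt 0 (L (X w) 0 1).
have Ly w : L (X w) 0 1 = Some (y w).
  rewrite /y; case E: (L (X w) 0 1) => [x|] //.
  by have := Lsome _ 0 1 (HXw w) ltr01; rewrite E.
have y01 w : 0 <= y w <= 1 by apply: (Lii (X w) 0 1 (HXw w) ltr01); exact: Ly.
have shiftrel c w : exists x, L (Defs.shift c (X w)) 0 1 = Some x /\
    exists k : int, y w = x + c + k%:~R.
  have := Liii (X w) c (c + 1) c (HXw w); rewrite ltrDl ltr01 => /(_ isT).
  rewrite subrr (_ : c + 1 - c = 1); last by lra.
  move=> Eq.
  have [x0 [y0 [k [E1 [E2 Ek]]]]] := Linv (X w) c (HXw w).
  move: Eq; rewrite E2; case E3: (L (Defs.shift c (X w)) 0 1) => [x|] //= [Ey0].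
  exists x; split => //; exists k.
  rewrite Ly in E1; case: E1 => E1; rewrite E1; move: Ek; rewrite Ey0; lra.
have ev B (mB : measurable B) c : measurable [set w | B (y w)] /\
    P [set w | B (y w)] =
    P [set w | exists x, L (Defs.shift c (X w)) 0 1 = Some x /\ B x].
  have hA := Lmeas 0 1 ltr01 B mB.
  have [m e] := @transfer R H d Omega P X HX Hsh c _ hA.
  have eq1 : [set w | [set g | H g /\ exists x, L g 0 1 = Some x /\ B x] (X w)]
      = [set w | B (y w)].
    apply/seteqP; split => w /=.
      by move=> [_ [x [Ex Bx]]]; rewrite Ly in Ex; case: Ex => ->.
    by move=> By; split => //; exists (y w).
  have eq2 : [set w | [set g | H g /\ exists x, L g 0 1 = Some x /\ B x]
                        (Defs.shift c (X w))]
      = [set w | exists x, L (Defs.shift c (X w)) 0 1 = Some x /\ B x].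
    apply/seteqP; split => w /=; first by case.
    by move=> h; split => //.
  by rewrite eq1 eq2 in m e.
pose S (a b : R) := [set z : R | a <= fr (z - t) < b].
have mphi : measurable_fun setT (fun z : R => fr (z - t)).
  apply: measurableT_comp; first exact: fr_measurable.
  by apply: measurable_funB => //; exact: measurable_cst.
have mS a b : measurable (S a b).
  have := mphi measurableT `[a, b[%classic (measurable_itv _).
  by rewrite setTI; congr measurable; apply/seteqP; split => z /=.
rewrite leNgt; apply/negP => ft1.
pose mx := Num.max (f t) 0.
have hm1 : f t <= mx by rewrite le_max lexx.
have hm2 : 0 <= mx by rewrite le_max lexx orbT.
have hm3 : mx < 1 by rewrite gt_max ft1 ltr01.
pose c0 := (mx + 1) / 2.
have c0pos : 0 < c0 by rewrite /c0; lra.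
have c01 : c0 < 1 by rewrite /c0; lra.
have ftc : f t < c0 by rewrite /c0; lra.
have [e e0 he] : exists2 e : R, 0 < e & forall x, t < x < t + e -> f x < c0.
  have tt : 0 < t < T by rewrite t0 tT.
  have := @cvgr_lt R R (t^'+)%classic _ f (f t) (proj1 (Hcad t tt)) c0 ftc.
  move=> h; have {h} h := h (at_right_proper_filter t).
  have := (proj1 (nbhs_ballP _ _)) h; case=> e /= e0 he; exists e => // x /andP[tx xte].
  apply: he => //.
  rewrite /ball /= ltr_norml; apply/andP; split; lra.
have Tt0 : 0 < T - t by lra.
pose n := (Num.truncn (e^-1 + (T - t)^-1)).+1.
have ei0 : 0 < e^-1 by rewrite invr_gt0.
have Ti0 : 0 < (T - t)^-1 by rewrite invr_gt0.
have nR : e^-1 + (T - t)^-1 < n%:R.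
  have /andP[_ h] := @truncn_itv R (e^-1 + (T - t)^-1)
    (addr_ge0 (ltW ei0) (ltW Ti0)).
  exact: h.
have n0 : 0 < n%:R :> R by lra.
pose a : R := n%:R^-1.
have na : n%:R * a = 1 by rewrite /a mulfV // gt_eqF.
have a0 : 0 < a by rewrite /a invr_gt0.
have ee : e * e^-1 = 1 by rewrite mulfV // gt_eqF.
have TT : (T - t) * (T - t)^-1 = 1 by rewrite mulfV // gt_eqF.
have ae : a < e by nra.
have taT : t + a <= T by nra.
pose F (k : nat) := [set w | S (k%:R * a) (k.+1%:R * a) (y w)].
have mF k : measurable (F k) := (ev _ (mS _ _) 0).1.
have eqF k : (k < n)%N -> P (F k) = P (F 0%N).
  move=> kn.
  pose c := k%:R * a.
  have c0' : 0 <= c by rewrite /c mulr_ge0 // ltW.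
  have ca : c + a <= 1.
    rewrite -na /c -{2}(mul1r a) -mulrDl ler_wpM2r ?(ltW a0) //.
    by rewrite natr1 ler_nat.
  have -> : F 0%N = [set w | S 0 a (y w)].
    by rewrite /F mul0r mul1r.
  rewrite (ev _ (mS 0 a) c).2; congr (P _); apply/seteqP; split => w /=.
    move=> Sk.
    have [x' [Ex' [m Em]]] := shiftrel c w.
    exists x'; split => //.
    have hx : x' - t = (fr (y w - t) - c) + (Num.floor (y w - t) - m)%:~R.
      by rewrite /fr intrB; lra.
    rewrite /S /= hx fr_addz (proj1 (andP (fr_range _))) /=.
    have hh := (fr_shift _ _ _ (fr_range (y w - t)) c0' ca a0); apply: (proj2 hh).
    by move: Sk; rewrite /F /S /= -natr1 mulrDl mul1r.
  case=> x [Ex Sx].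
  have [x' [Ex' [m Em]]] := shiftrel c w.
  rewrite Ex in Ex'; case: Ex' => Exx; subst x'.
  have hx : x - t = (fr (y w - t) - c) + (Num.floor (y w - t) - m)%:~R.
    by rewrite /fr intrB; lra.
  move: Sx; rewrite /S /= hx fr_addz => /andP[_ hlt].
  have := (fr_shift _ _ _ (fr_range (y w - t)) c0' ca a0).1 hlt.
  by rewrite /F /S /= -natr1 mulrDl mul1r.
have tF : trivIset [set: 'I_n] (fun i : 'I_n => F i).
  apply/trivIsetP => i j _ _ ij; apply/seteqP; split => // w [].
  rewrite /F /S /= => /andP[h1 h2] /andP[h3 h4].
  have [lij|lji] : (i < j)%N \/ (j < i)%N.
    case: (ltngtP i j) => [l|l|eij]; [by left|by right|].
    by move: ij; rewrite (val_inj eij) eqxx.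
    have : i.+1%:R * a <= j%:R * a by rewrite ler_wpM2r ?(ltW a0) // ler_nat.
    lra.
  have : j.+1%:R * a <= i%:R * a by rewrite ler_wpM2r ?(ltW a0) // ler_nat.
  lra.
have sumF : (\sum_(i < n) P (F i) = 1)%E.
  have h : P (\big[setU/set0]_(i < n) F i) = (\sum_(i < n) P (F i))%E :=
    measure_bigsetU_ord P predT (fun i : 'I_n => mF i) tF.
  rewrite -h.
  rewrite -(probability_setT P); congr (P _).
  rewrite -bigcup_mkord; apply/seteqP; split => // w _.
  pose u := fr (y w - t).
  have /andP[u0 u1] := fr_range (y w - t).
  have un0 : 0 <= u * n%:R by rewrite mulr_ge0 // ltW.
  have /andP[k1 k2] := truncn_itv un0.
  exists (Num.truncn (u * n%:R)).
    rewrite /= -(ltr_nat R); apply: le_lt_trans k1 _.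
    by rewrite -{2}(mul1r n%:R) ltr_pM2r.
  rewrite /F /S /=; apply/andP; split.
    rewrite -(ler_pM2r n0) -mulrA (mulrC a) na mulr1; exact: k1.
  rewrite -(ltr_pM2r n0) -mulrA (mulrC a) na mulr1; exact: k2.
have PF0 : P (F 0%N) = a%:E.
  have hp0 : (0 <= P (F 0%N))%E := measure_ge0 P _.
  have hp1 : (P (F 0%N) <= 1)%E := probability_le1 P (mF 0%N).
  have fin : P (F 0%N) \is a fin_num.
    by rewrite ge0_fin_numE // (le_lt_trans hp1) // ltry.
  move: sumF; rewrite (eq_bigr (fun _ => P (F 0%N))); last first.
    by move=> i _; apply: eqF.
  rewrite sumr_const card_ord -(fineK fin) => hn.
  have : (fine (P (F 0%N)) *+ n)%:E = 1%E by rewrite EFin_natmul.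
  case => {}hn; congr EFin.
  have hn' : fine (P (F 0%N)) * n%:R = 1 by rewrite mulr_natr.
  apply: (@mulIf _ n%:R); first by rewrite gt_eqF.
  by rewrite hn' /a mulVf // gt_eqF.
pose I := `[t, t + a[%classic.
have mI : measurable I := measurable_itv _.
pose Tg := [set w | exists x, L (X w) 0 T = Some x /\ I x].
have mTg : measurable Tg.
  have [m _] := @transfer R H d Omega P X HX Hsh 0 _ (Lmeas 0 T T0 I mI).
  move: m; congr measurable; apply/seteqP; split => w /=; first by case.
  by move=> h; split.
have subF : F 0%N `<=` Tg.
  move=> w; rewrite /F /S /= mul0r mul1r => /andP[_ hlt].
  have /andP[yw0 yw1] := y01 w.
  have yI : t <= y w < t + a.
    have [ty|yt] := leP t (y w).
      rewrite fr_id in hlt; last by apply/andP; split; lra.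
      by apply/andP; split; lra.
    have ee1 : y w - t = (y w - t + 1) + (-1)%:~R by rewrite intrN; lra.
    rewrite ee1 fr_addz fr_id in hlt; last by apply/andP; split; lra.
    lra.
  exists (y w); split; last first.
    by rewrite /I /= in_itv /=.
  apply: (Liv (X w) 0 1 0 T (HXw w) ltr01 T0 (lexx _) T1 (y w) (Ly w)).
  by apply/andP; split; lra.
have le1 : (P (F 0%N) <= P Tg)%E.
  by apply: le_measure => //; rewrite inE.
have dens : P Tg = (\int[lebesgue_measure]_(x in I) (f x)%:E)%E.
  apply: Hdens => // x; rewrite /I /= !in_itv /= => /andP[h1 h2].
  by apply/andP; split; lra.
have ub := @int_ub R f I c0 mI (ltW c0pos).
have ub' : (\int[lebesgue_measure]_(x in I) (f x)%:E <= c0%:E * a%:E)%E.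
  have := ub _; rewrite lebesgue_measure_itv /= ifT; last by rewrite lte_fin; lra.
  rewrite -EFinD (_ : t + a - t = a) //; last by lra.
  apply => x; rewrite /I /= in_itv /= => /andP[h1 h2].
  have [->|tx] := eqVneq x t; first exact: ltW.
  apply/ltW/he/andP; split; last by lra.
  by rewrite lt_neqAle eq_sym tx h1.
have : (a%:E <= c0%:E * a%:E)%E.
  by apply: le_trans ub'; rewrite -dens -PF0.
rewrite -EFinM lee_fin => hh.
nra.
Qed.
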